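(* Let $D$ be a dialgebra and $E$ a dendriform algebra over $K$. Then on $D\otimes E$ the bracket defined on generators by $$[x\otimes a,y\otimes b]:=(x\dashv y)\otimes(a\prec b)-(y\vdash x)\otimes(b\succ a)-(y\dashv x)\otimes(b\prec a)+(x\vdash y)\otimes(a\succ b)$$ ($x,y\in D$, $a,b\in E$), extended bilinearly, is a Lie bracket.
   Context: A dialgebra is a vector space $D$ with bilinear $\dashv,\vdash$ satisfying $(x\dashv y)\dashv z=x\dashv(y\vdash z)$, $(x\dashv y)\dashv z=x\dashv(y\dashv z)$, $(x\vdash y)\dashv z=x\vdash(y\dashv z)$, $(x\dashv y)\vdash z=x\vdash(y\vdash z)$, $(x\vdash y)\vdash z=x\vdash(y\vdash z)$. A dendriform algebra is a vector space $E$ with bilinear $\prec,\succ$ satisfying (i) $(a\prec b)\prec c=a\prec(b\prec c)+a\prec(b\succ c)$, (ii) $(a\succ b)\prec c=a\succ(b\prec c)$, (iii) $(a\prec b)\succ c+(a\succ b)\succ c=a\succ(b\succ c)$. *)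

(* Defs.v *)
From mathcomp Require Import all_boot all_algebra.
Set Implicit Arguments. Unset Strict Implicit. Unset Printing Implicit Defensive.
Import GRing.Theory.
Local Open Scope ring_scope.

Definition linfun (K : fieldType) (U V : lmodType K) (g : U -> V) : Prop :=
  forall (c : K) (u v : U), g (c *: u + v) = c *: g u + g v.

Definition bilin (K : fieldType) (U V W : lmodType K) (f : U -> V -> W) : Prop :=
  (forall v : V, linfun (fun u => f u v)) /\ (forall u : U, linfun (f u)).

(* Dialgebra: bilinear dashv (dl) and vdash (dr) with the five axioms *)
Definition is_dialgebra (K : fieldType) (D : lmodType K) (dl dr : D -> D -> D) : Prop :=
  [/\ bilin dl, bilin dr &
   forall x y z : D,
   [/\ dl (dl x y) z = dl x (dr y z),
       dl (dl x y) z = dl x (dl y z),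
       dl (dr x y) z = dr x (dl y z),
       dr (dl x y) z = dr x (dr y z) &
       dr (dr x y) z = dr x (dr y z)]].

(* Dendriform algebra: bilinear prec (pl) and succ (pr) with axioms (i)-(iii) *)
Definition is_dendriform (K : fieldType) (E : lmodType K) (pl pr : E -> E -> E) : Prop :=
  [/\ bilin pl, bilin pr &
   forall a b c : E,
   [/\ pl (pl a b) c = pl a (pl b c) + pl a (pr b c),
       pl (pr a b) c = pr a (pl b c) &
       pr (pl a b) c + pr (pr a b) c = pr a (pr b c)]].

(* (T, t) is a tensor product of D and E over K: t is bilinear, T is spanned
   by the pure tensors, and every bilinear map out of D x E factors linearly
   through t (universal property; uniqueness follows from spanning). *)
Definition is_tensor_product (K : fieldType) (D E T : lmodType K)
    (t : D -> E -> T) : Prop :=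
  [/\ bilin t,
      (forall z : T, exists s : seq (D * E), z = \sum_(p <- s) t p.1 p.2) &
      (forall (W : lmodType K) (f : D -> E -> W), bilin f ->
         exists g : T -> W, linfun g /\ forall x a, g (t x a) = f x a)].

Definition is_lie_bracket (K : fieldType) (L : lmodType K) (br : L -> L -> L) : Prop :=
  [/\ bilin br,
      (forall z : L, br z z = 0) &
      (forall u v w : L, br u (br v w) + br v (br w u) + br w (br u v) = 0)].

(* Main.v *)
Require Import Defs.
From mathcomp Require Import all_boot all_algebra.
Set Implicit Arguments. Unset Strict Implicit. Unset Printing Implicit Defensive.
Import GRing.Theory.
Local Open Scope ring_scope.

Section Lin.
Variables (K : fieldType) (U V : lmodType K) (g : U -> V).
Hypothesis hg : Defs.linfun g.
Lemma linD u v : g (u + v) = g u + g v.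
Proof. by have := hg 1 u v; rewrite !scale1r. Qed.
Lemma lin0 : g 0 = 0.
Proof. by have := hg (-1) 0 0; rewrite scaler0 addr0 scaleN1r addNr. Qed.
Lemma linN u : g (- u) = - g u.
Proof. by have := hg (-1) u 0; rewrite addr0 lin0 addr0 !scaleN1r. Qed.
Lemma linB u v : g (u - v) = g u - g v.
Proof. by rewrite linD linN. Qed.
End Lin.

Lemma ext_zero (K : fieldType) (D E T W : lmodType K) (t : D -> E -> T)
  (f : T -> W) :
  (forall z : T, exists s : seq (D * E), z = \sum_(p <- s) t p.1 p.2) ->
  (forall u v, f (u + v) = f u + f v) -> f 0 = 0 ->
  (forall x a, f (t x a) = 0) -> forall u, f u = 0.
Proof.
move=> sp hD h0 hp u; have [s ->] := sp u.
elim: s => [|p s IH]; first by rewrite big_nil.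
by rewrite big_cons hD IH hp addr0.
Qed.

Theorem proposition5p3 (K : fieldType) (D E T : lmodType K)
    (dl dr : D -> D -> D) (pl pr : E -> E -> E) (t : D -> E -> T)
    (br : T -> T -> T) :
  is_dialgebra dl dr -> is_dendriform pl pr -> is_tensor_product t ->
  bilin br ->
  (forall (x y : D) (a b : E),
      br (t x a) (t y b) =
        t (dl x y) (pl a b) - t (dr y x) (pr b a)
        - t (dl y x) (pl b a) + t (dr x y) (pr a b)) ->
  is_lie_bracket br.
Proof.
move=> [_ _ Dax] [_ _ Eax] [[tl tr] sp _] [bl brr] hbr.
have brDl u1 u2 v : br (u1 + u2) v = br u1 v + br u2 v by exact: (linD (bl v) u1 u2).
have brDr u v1 v2 : br u (v1 + v2) = br u v1 + br u v2 by exact: (linD (brr u)).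
have brBl u1 u2 v : br (u1 - u2) v = br u1 v - br u2 v by exact: (linB (bl v) u1 u2).
have brBr u v1 v2 : br u (v1 - v2) = br u v1 - br u v2 by exact: (linB (brr u)).
have br0l v : br 0 v = 0 by exact: (lin0 (bl v)).
have br0r u : br u 0 = 0 by exact: (lin0 (brr u)).
have tDr x a b : t x (a + b) = t x a + t x b by exact: (linD (tr x)).
pose m x a y b := t (dl x y) (pl a b) + t (dr x y) (pr a b).
have hbr' x a y b : br (t x a) (t y b) = m x a y b - m y b x a.
  by rewrite hbr /m opprD !addrA (ACl (1*4*3*2)%AC).
pose R3 x a y b z c := m x a (dl y z) (pl b c) + m x a (dr y z) (pr b c).
pose L3 x a y b z c := m (dl x y) (pl a b) z c + m (dr x y) (pr a b) z c.
have assoc x a y b z c : R3 x a y b z c = L3 x a y b z c.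
  have [d1 d2 d3 d4 d5] := Dax x y z; have [e1 e2 e3] := Eax a b c.
  rewrite /R3 /L3 /m -d1 d2 d3 d4 d5 e1 e2 -e3 !tDr !addrA.
  by rewrite (ACl (1*3*4*2*5)%AC).
have brm x a y b z c :
    br (t x a) (m y b z c) = R3 x a y b z c - L3 y b z c x a.
  by rewrite {1}/m brDr !hbr' /R3 /L3 addrACA -opprD.
clearbody L3 R3 m.
pose J u v w := br u (br v w) + br v (br w u) + br w (br u v).
have Jp x a y b z c : J (t x a) (t y b) (t z c) = 0.
  rewrite /J !hbr' !brBr !brm !assoc !opprB !addrA.
  rewrite (ACl ((1*10)*(2*5)*(3*12)*(4*7)*(6*9)*(8*11))%AC) /=.
  by rewrite !subrr !addNr !addr0.
have Jc u v w : J u v w = J v w u by rewrite /J (ACl (2*3*1)%AC).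
have Jadd u1 u2 v w : J (u1 + u2) v w = J u1 v w + J u2 v w.
  by rewrite /J !(brDl, brDr) !addrA (ACl (1*3*5*2*4*6)%AC).
have J0 v w : J 0 v w = 0 by rewrite /J !(br0l, br0r) !addr0.
have P1 u y b z c : J u (t y b) (t z c) = 0.
  apply: (ext_zero sp (f := fun u => J u (t y b) (t z c))).
  - by move=> u1 u2 /=; apply: Jadd.
  - exact: J0.
  - by move=> x a; apply: Jp.
have P2 u v z c : J u v (t z c) = 0.
  rewrite Jc; apply: (ext_zero sp (f := fun v => J v (t z c) u)).
  - by move=> u1 u2 /=; apply: Jadd.
  - exact: J0.
  - by move=> y b; rewrite -Jc P1.
have P3 u v w : J u v w = 0.
  rewrite -Jc; apply: (ext_zero sp (f := fun w => J w u v)).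
  - by move=> u1 u2 /=; apply: Jadd.
  - exact: J0.
  - by move=> z c; rewrite Jc P2.
have anti1 x a v : br (t x a) v + br v (t x a) = 0.
  apply: (ext_zero sp (f := fun v => br (t x a) v + br v (t x a))).
  - by move=> u1 u2; rewrite brDr brDl addrACA.
  - by rewrite br0r br0l addr0.
  - by move=> y b; rewrite !hbr' -opprB addNr.
split; first by split.
- move=> z; have [s ->] := sp z; elim: s => [|p s IH]; first by rewrite big_nil br0l.
  by rewrite big_cons brDl !brDr IH addr0 hbr' subrr add0r anti1.
- exact: P3.
Qed.
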